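(* Let $N\ge 2$ and let $\hat{\mu}^A=(\hat\mu^A_1,\dots,\hat\mu^A_N)$ and $\hat{\mu}^B=(\hat\mu^B_1,\dots,\hat\mu^B_N)$ be real-valued random vectors (with finite expectations). For $1\le K\le N$ let $\mathcal{M}_K$ be the set of indices corresponding to the $K$ largest values of $\hat{\mu}^B$, and let $a_K^*\in\mathcal{M}_K$ be an index with $\hat{\mu}^A_{a_K^*}=\max_{i\in\mathcal{M}_K}\hat{\mu}^A_i$ (ties broken uniformly at random). Then for every $1\le K<N$, $$\mathbb{E}\left[\hat{\mu}^B_{a_K^*}\right]\ \ge\ \mathbb{E}\left[\hat{\mu}^B_{a_{K+1}^*}\right],$$ i.e. as $K$ decreases the underestimation decays monotonically.
   Context: In the paper, $\hat\mu^A_i$ and $\hat\mu^B_i$ are sample-average estimators of $\mathbb{E}[X_i]$ for independent random variables $X_1,\dots,X_N$, computed from two disjoint random halves $S^A,S^B$ of a sample set $S=\bigcup_i S_i$, where $S_i$ consists of i.i.d. samples of $X_i$: $\hat\mu_i^A=\frac{1}{|S_i^A|}\sum_{s\in S_i^A}s$, $\hat\mu_i^B=\frac{1}{|S_i^B|}\sum_{s\in S_i^B}s$. *)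

(* Defs.v *)
From HB Require Import structures.
From mathcomp Require Import all_boot all_order all_algebra.
From mathcomp Require Import all_classical all_reals all_analysis.
Set Implicit Arguments. Unset Strict Implicit. Unset Printing Implicit Defensive.
Import Order.TTheory GRing.Theory Num.Theory.
Local Open Scope ring_scope.

Section Defs.
Variables (R : realType) (N : nat).

Definition ranked_before (b : 'I_N -> R) (j i : 'I_N) : bool :=
  (b i < b j) || ((b j == b i) && (j < i)%N).

Definition topK (b : 'I_N -> R) (K : nat) : {set 'I_N} :=
  [set i | (#|[set j | ranked_before b j i]| < K)%N].

Definition argmaxIn (a : 'I_N -> R) (M : {set 'I_N}) : {set 'I_N} :=
  [set i in M | [forall j in M, a j <= a i]].

(* Value of b at a*_K, averaged over the uniformly random tie-breaking
   among the maximizers of a over M_K (= conditional expectation of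
   b_{a*_K} given the realized vectors a and b). *)
Definition sel_value (a b : 'I_N -> R) (K : nat) : R :=
  (\sum_(i in argmaxIn a (topK b K)) b i) / (#|argmaxIn a (topK b K)|)%:R.

End Defs.

(* Main.v *)
Require Import Defs.
From HB Require Import structures.
From mathcomp Require Import all_boot all_order all_algebra.
From mathcomp Require Import all_classical all_reals all_analysis.
Import Order.TTheory GRing.Theory Num.Theory.
Local Open Scope ring_scope.

Section PW.
Variables (R : realType) (N : nat).
Implicit Types (a b : 'I_N -> R).

Lemma rb_irr b i : ~~ ranked_before b i i.
Proof. by rewrite /ranked_before ltxx eqxx ltnn. Qed.

Lemma rb_trans b i j k : ranked_before b i j -> ranked_before b j k ->
  ranked_before b i k.
Proof.
rewrite /ranked_before => /orP[h1|/andP[/eqP e1 h1]] /orP[h2|/andP[/eqP e2 h2]].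
- by rewrite (lt_trans h2 h1).
- by rewrite -e2 h1.
- by rewrite e1 h2.
- by rewrite e1 -e2 eqxx (ltn_trans h1 h2) orbT.
Qed.

Definition cnt b i := #|[set j | ranked_before b j i]|.

Lemma cnt_lt b i j : ranked_before b i j -> (cnt b i < cnt b j)%N.
Proof.
move=> hij; rewrite /cnt; apply: (@proper_card _ [set k | ranked_before b k i]).
apply/properP; split.
  by apply/fintype.subsetP => k; rewrite !inE => hk; apply: rb_trans hk hij.
by exists i; rewrite !inE ?hij // rb_irr.
Qed.

Lemma topK_ne b K : (0 < K)%N -> (0 < N)%N -> exists i, i \in topK b K.
Proof.
move=> K0 N0; pose i0 := Ordinal N0.
case: (@arg_minP _ nat _ i0 predT (cnt b) isT) => i _ hmin.
exists i; rewrite inE; apply: leq_trans K0.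
rewrite ltnS leqn0 cards_eq0; apply/eqP/setP => j; rewrite !inE.
apply/negP => hj; have := hmin j isT; rewrite leEnat leqNgt.
by rewrite (@cnt_lt b _ _ hj).
Qed.

Lemma topK_low b K i k : i \notin topK b K -> k \in topK b K -> b i <= b k.
Proof.
rewrite !inE -!leqNgt => hi hk; rewrite leNgt; apply/negP => hlt.
have : ranked_before b i k by rewrite /ranked_before hlt.
move/(@cnt_lt b); rewrite /cnt => h.
by move: (leq_trans hi (ltnW h)); rewrite leqNgt hk.
Qed.

Lemma topK_sub b K : topK b K \subset topK b K.+1.
Proof. by apply/fintype.subsetP => i; rewrite !inE => /ltnW. Qed.

Lemma argmax_ne a (M : {set 'I_N}) : (exists i, i \in M) -> exists i, i \in argmaxIn a M.
Proof.
move=> [i0 Mi0].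
case: (@arg_maxP _ R _ i0 (mem M) a Mi0) => i Mi hmax.
exists i; rewrite inE; apply/andP; split=> //; apply/forallP => j; apply/implyP => Mj.
exact: hmax.
Qed.


Lemma sel_mono a b K : (0 < K)%N -> (0 < N)%N -> sel_value a b K.+1 <= sel_value a b K.
Proof.
move=> K0 N0.
have hM := @topK_ne b K K0 N0.
have hM' := @topK_ne b K.+1 (ltn0Sn K) N0.
have [i1 hA] := @argmax_ne a _ hM.
have [i2 hA'] := @argmax_ne a _ hM'.
rewrite /sel_value.
set M := topK b K in hA hM *; set M' := topK b K.+1 in hA' hM' *.
set A := argmaxIn a M in hA *; set A' := argmaxIn a M' in hA' *.
set L := (\sum_(i in A) b i) / (#|A|)%:R.
have cA : (0 < #|A|)%N by apply/card_gt0P; exists i1.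
have cA' : (0 < #|A'|)%N by apply/card_gt0P; exists i2.
have cAR : 0 < (#|A|)%:R :> R by rewrite ltr0n.
have cAR' : 0 < (#|A'|)%:R :> R by rewrite ltr0n.
have MM' : M \subset M' by exact: topK_sub.
have inA x : x \in A = (x \in M) && [forall j in M, a j <= a x] by rewrite inE.
have inA' x : x \in A' = (x \in M') && [forall j in M', a j <= a x] by rewrite inE.
have F1 x : x \in A' -> x \notin A -> b x <= L.
  rewrite inA' inA => /andP[xM' /forallP hx] hnA.
  have xM : x \notin M.
    apply/negP => xM; move/negP: hnA; apply; rewrite xM /=.
    apply/forallP => j; apply/implyP => jM.
    by have /implyP := hx j; apply; apply: (fintype.subsetP MM').
  rewrite /L ler_pdivlMr //.
  rewrite mulr_natr -sumr_const; apply: ler_sum => y yA.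
  by apply: topK_low xM _; move: yA; rewrite inA => /andP[].
have F2 : (forall x, x \in A' -> x \notin A) \/ (forall x, x \in A -> x \in A').
  case: (boolP [exists x, (x \in A') && (x \in A)]).
    move/existsP => [k /andP[kA' kA]]; right => y yA.
    move: kA' kA yA; rewrite inA' !inA => /andP[kM' /forallP hk] /andP[kM /forallP hk2] /andP[yM /forallP hy].
    have e : a y = a k.
      apply/eqP; rewrite eq_le.
      by have /implyP -> := hk2 y => //; have /implyP -> := hy k.
    rewrite inA' (fintype.subsetP MM') //=; apply/forallP => j; rewrite e; exact: hk.
  move=> h; left => x xA'; apply/negP => xA; move/negP: h; apply.
  by apply/existsP; exists x; rewrite xA' xA.
rewrite ler_pdivrMr //.
rewrite -subr_le0.
have -> : \sum_(i in A') b i - L * (#|A'|)%:R = \sum_(i in A') (b i - L).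
  by rewrite sumrB sumr_const mulr_natr.
rewrite (bigID (fun i => i \in A)) /=.
rewrite -[leRHS](addr0 0); apply: lerD; last first.
  by apply: sumr_le0 => i /andP[iA' iA]; rewrite subr_le0; exact: F1.
case: F2 => h.
  rewrite big_pred0 // => i; apply/negP => /andP[iA' iA].
  by move: (h i iA'); rewrite iA.
rewrite (eq_bigl (fun i => i \in A)); last first.
  by move=> i; apply/andP/idP => [[]//|iA]; split => //; exact: h.
rewrite sumrB sumr_const /L -(mulr_natr (_ / _)) divfK ?subrr // gt_eqF //.
Qed.

End PW.

Local Open Scope ereal_scope.

Lemma int_mono (R : realType) (d : measure_display) (T : measurableType d)
  (mu : {measure set T -> \bar R}) (f g : T -> R) :
  (forall x, (f x <= g x)%R) -> \int[mu]_w (f w)%:E <= \int[mu]_w (g w)%:E.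
Proof.
move=> fg; rewrite /integral; apply: leeB.
  apply: le_ereal_sup => _ /= [h hh <-]; exists h => //= x.
  apply: (le_trans (hh x)); rewrite !patch_setT !funeposE /=.
  by rewrite ge_max !le_max lee_fin fg lexx !orbT.
apply: le_ereal_sup => _ /= [h hh <-]; exists h => //= x.
apply: (le_trans (hh x)); rewrite !patch_setT !funenegE /=.
by rewrite ge_max !le_max lee_fin lerN2 fg lexx !orbT.
Qed.

Theorem mainTheorem1 (R : realType) (d : measure_display) (T : measurableType d)
  (P : probability T R) (N : nat) (muA muB : 'I_N -> {RV P >-> R}) :
  (2 <= N)%N ->
  (forall i, P.-integrable setT (EFin \o muA i)) ->
  (forall i, P.-integrable setT (EFin \o muB i)) ->
  forall K : nat, (1 <= K)%N -> (K < N)%N ->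
  \int[P]_w (sel_value (fun i => muA i w) (fun i => muB i w) K.+1)%:E
    <= \int[P]_w (sel_value (fun i => muA i w) (fun i => muB i w) K)%:E.
Proof.
move=> N2 _ _ K K1 _.
apply: int_mono => w.
apply: sel_mono => //.
exact: leq_trans N2.
Qed.
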